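(* Fix $\epsilon>0$ and define \[U_1:=\left\{(a,b)\in\bigl([0,1/2)\times[1/2,1)\bigr)\cup\bigl([1/2,1)\times[0,1/2)\bigr):\ a+b<\tfrac34\right\},\] \[U_2:=\left\{(a,b)\in[0,1/2)\times[0,1):\ \tfrac34+\epsilon<a+b<\tfrac54\right\},\] $U:=U_1\cup U_2$ and $S_\epsilon:=\pi(U)\subset\mathbb{T}^2$. Let $\theta_x,\theta_z\in S_\epsilon$ and $\theta_y\in\mathbb{T}^2$ satisfy $2\theta_y=\theta_x+\theta_z$, and write $d:=\frac{\pi^{-1}(\theta_z)-\pi^{-1}(\theta_x)}{2}\in\mathbb{R}^2$. If $|d_1+d_2|\le\epsilon/1000$, then \[(1-\{p(\theta_x)\})^2+(1-\{p(\theta_z)\})^2-2(1-\{p(\theta_y)\})^2\ge 2d_1^2.\]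
   Context: $\mathbb{T}^2:=(\mathbb{R}/\mathbb{Z})^2$. $\pi:\mathbb{R}^2\to\mathbb{T}^2$, $x\mapsto x+\mathbb{Z}^2$, and for $\theta\in\mathbb{T}^2$, $\pi^{-1}(\theta)$ denotes the unique $x\in[0,1)^2$ with $\pi(x)=\theta$. The projection $p:\mathbb{T}^2\to[0,1)$ is $p(\theta)=\pi^{-1}(\theta)_1$. For $x\in[0,1)$, $\{x\}:=x$ if $x\in[0,1/2)$ and $\{x\}:=x-1/2$ otherwise (this is not the usual fractional part). *)

(* Defs.v *)
From Stdlib Require Import Reals Lra.
Open Scope R_scope.

(* The torus T^2 = (R/Z)^2, represented by its canonical representatives
   in [0,1)^2. *)
Record T2 : Type := mkT2 {
  t1 : R; t2 : R;
  t1_ge0 : 0 <= t1; t1_lt1 : t1 < 1;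
  t2_ge0 : 0 <= t2; t2_lt1 : t2 < 1 }.

Lemma frac_ge0 (r : R) : 0 <= frac_part r.
Proof. destruct (base_fp r) as [H _]. lra. Qed.
Lemma frac_lt1 (r : R) : frac_part r < 1.
Proof. destruct (base_fp r) as [_ H]. exact H. Qed.

Definition pi (x : R * R) : T2 :=
  mkT2 (frac_part (fst x)) (frac_part (snd x))
       (frac_ge0 _) (frac_lt1 _) (frac_ge0 _) (frac_lt1 _).

Definition pi_inv (th : T2) : R * R := (t1 th, t2 th).

Definition tadd (a b : T2) : T2 :=
  pi (fst (pi_inv a) + fst (pi_inv b), snd (pi_inv a) + snd (pi_inv b)).

Definition p (th : T2) : R := fst (pi_inv th).

Definition brace (x : R) : R := if Rlt_dec x (1/2) then x else x - 1/2.

Definition U1 (u : R * R) : Prop :=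
  let a := fst u in let b := snd u in
  ((0 <= a < 1/2 /\ 1/2 <= b < 1) \/ (1/2 <= a < 1 /\ 0 <= b < 1/2))
  /\ a + b < 3/4.

Definition U2 (eps : R) (u : R * R) : Prop :=
  let a := fst u in let b := snd u in
  (0 <= a < 1/2 /\ 0 <= b < 1) /\ 3/4 + eps < a + b < 5/4.

Definition U (eps : R) (u : R * R) : Prop := U1 u \/ U2 eps u.

Definition S (eps : R) (th : T2) : Prop := exists u, U eps u /\ pi u = th.

(* Main.v *)
Require Import Defs.
From Stdlib Require Import Reals Lra Lia Psatz ZArith.
Open Scope R_scope.

Lemma fp_id (r : R) : 0 <= r < 1 -> frac_part r = r.
Proof.
  intros H. assert (E : 0%Z = Int_part r) by (apply Int_part_spec; simpl; lra).
  unfold frac_part. rewrite <- E. simpl. ring.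
Qed.

Lemma S_rep eps th : S eps th -> U eps (t1 th, t2 th).
Proof.
  intros [u [Hu Hp]]. subst th. simpl.
  assert (B : 0 <= fst u < 1 /\ 0 <= snd u < 1).
  { destruct Hu as [[[[A B]|[A B]] _]|[[A B] _]]; lra. }
  rewrite !fp_id by tauto. destruct u; exact Hu.
Qed.

Lemma fp_eq a b : frac_part a = frac_part b -> exists n : Z, a - b = IZR n.
Proof.
  unfold frac_part. intros H. exists (Int_part a - Int_part b)%Z.
  rewrite minus_IZR. lra.
Qed.

Theorem proposition4p4 (eps : R) (heps : 0 < eps) (thx thy thz : T2)
  (hx : S eps thx) (hz : S eps thz) (hy : tadd thy thy = tadd thx thz) :
  let d1 := (fst (pi_inv thz) - fst (pi_inv thx)) / 2 in
  let d2 := (snd (pi_inv thz) - snd (pi_inv thx)) / 2 in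
  Rabs (d1 + d2) <= eps / 1000 ->
  (1 - brace (p thx)) ^ 2 + (1 - brace (p thz)) ^ 2
    - 2 * (1 - brace (p thy)) ^ 2 >= 2 * d1 ^ 2.
Proof.
  apply S_rep in hx. apply S_rep in hz.
  apply (f_equal t1) in hy. unfold tadd, pi_inv in hy. simpl in hy.
  destruct (fp_eq _ _ hy) as [n Hn].
  destruct thx as [x1 x2 ? ? ? ?], thy as [y1 y2 ? ? ? ?], thz as [z1 z2 ? ? ? ?].
  simpl in *. unfold p, pi_inv, brace. simpl.
  assert (Hb : (-2 < n < 2)%Z).
  { split; apply lt_IZR; simpl; lra. }
  assert (Hc : n = (-1)%Z \/ n = 0%Z \/ n = 1%Z) by lia.
  assert (Hy : y1 = (x1 + z1 + IZR n) / 2) by lra.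
  clear Hn hy Hb. intros HR.
  unfold U, U1, U2 in hx, hz; simpl in hx, hz.
  destruct Hc as [-> | [-> | ->]]; simpl in Hy; subst y1;
  destruct (Rlt_dec x1 (1/2)); destruct (Rlt_dec z1 (1/2));
  destruct (Rlt_dec _ (1/2));
  revert HR; unfold Rabs; destruct (Rcase_abs _); intro HR;
  destruct hx as [[[[? ?]|[? ?]] ?]|[[? ?] ?]];
  destruct hz as [[[[? ?]|[? ?]] ?]|[[? ?] ?]];
  try lra; nra.
Qed.
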